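(* Let $H:\mathbb{R}^{2m}\to\mathbb{R}$ be smooth and let $\bar\nabla H$ be any discrete gradient of $H$. Let $$S=\begin{pmatrix}0&1\\-1&0\end{pmatrix}$$ (with $m\times m$ blocks). Let $\theta$ be a real $2m\times 2m$ matrix with $\theta^T=S^{-1}\theta S$, and let $f$ be an analytic function whose power series converges at $\theta$. Then the scheme $$y_{n+1}-y_n=f(\theta)\,S\,\bar\nabla H(y_n,y_{n+1})$$ preserves the energy integral exactly: $H(y_{n+1})=H(y_n)$.
   Context: Points are written $y=(x,p)\in\mathbb{R}^{2m}$, $y_n=(x_n,p_n)$. A discrete gradient of $H$ is an $\mathbb{R}^{2m}$-valued function $\bar\nabla H(y_n,y_{n+1})$ with components $\Delta H/\Delta y^k$ such that: - $\sum_k\frac{\Delta H}{\Delta y^k}(y^k_{n+1}-y^k_n)=H(y_{n+1})-H(y_n)$; - $\bar\nabla H(y,y)=(H_x,H_p)$. *)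

(* Defs.v *)
(* R : realType, points of R^{2m} are column vectors 'cV[R]_(m+m). *)
From HB Require Import structures.
From mathcomp Require Import all_boot all_order all_algebra.
From mathcomp Require Import all_classical all_reals all_analysis.
Set Implicit Arguments. Unset Strict Implicit. Unset Printing Implicit Defensive.
Import Order.TTheory GRing.Theory Num.Theory.
Import numFieldNormedType.Exports.
Local Open Scope classical_set_scope.
Local Open Scope ring_scope.

Fixpoint Ck {R : realType} {V : normedModType R} (k : nat) (f : V -> R) : Prop :=
  match k with
  | O => continuous f
  | S k' => (forall x, differentiable f x) /\ (forall v : V, Ck k' (fun x => 'D_v f x))
  end.

Definition smooth {R : realType} {V : normedModType R} (f : V -> R) : Prop :=
  forall k, Ck k f.

Definition grad {R : realType} {n : nat} (H : 'cV[R]_n -> R) (y : 'cV[R]_n) : 'cV[R]_n :=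
  \col_k ('D_(delta_mx k 0) H y).

Definition discrete_gradient {R : realType} {n : nat} (H : 'cV[R]_n -> R)
    (DG : 'cV[R]_n -> 'cV[R]_n -> 'cV[R]_n) : Prop :=
  (forall y y' : 'cV[R]_n,
      \sum_(k < n) DG y y' k 0 * (y' k 0 - y k 0) = H y' - H y) /\
  (forall y : 'cV[R]_n, DG y y = grad H y).

Definition Ssymp {R : realType} (m : nat) : 'M[R]_(m + m) :=
  block_mx 0 1%:M (- 1%:M) 0.

(* f(theta) = sum_k a_k theta^k : the power series with coefficients a converges at theta to F. *)
Definition pseries_mx_to {R : realType} {n : nat} (a : nat -> R) (theta F : 'M[R]_n) : Prop :=
  (fun N : nat => \sum_(k < N) a k *: theta ^+ k) @ \oo --> F.

(* Main.v *)
Require Import Defs.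
From HB Require Import structures.
From mathcomp Require Import all_boot all_order all_algebra.
From mathcomp Require Import all_classical all_reals all_analysis.
From mathcomp Require Import ring.
Import Order.TTheory GRing.Theory Num.Theory.
Import numFieldNormedType.Exports.
Local Open Scope ring_scope.

Section S.
Variable R : realType.

Lemma Ssq m : Ssymp m *m Ssymp m = - 1%:M :> 'M[R]_(m+m).
Proof.
rewrite /Ssymp mulmx_block !mul0mx !mulmx0 !mulmx1 !mul1mx !addr0 !add0r.
have -> : - (1%:M : 'M[R]_m) = (-1)%:M by apply/matrixP=> i j; rewrite !mxE mulNrn.
have -> : - (1%:M : 'M[R]_(m+m)) = (-1)%:M by apply/matrixP=> i j; rewrite !mxE mulNrn.
by rewrite scalar_mx_block.
Qed.

Lemma Str m : (Ssymp m)^T = - Ssymp m :> 'M[R]_(m+m).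
Proof.
rewrite /Ssymp tr_block_mx !trmx0 trmx1 raddfN /= trmx1 opp_block_mx !oppr0 opprK.
reflexivity.
Qed.

Lemma Qskew n (g : 'cV[R]_n) (A : 'M[R]_n) : A^T = - A ->
  \sum_k g k 0 * (A *m g) k 0 = 0.
Proof.
move=> hA.
have e : \sum_k g k 0 * (A *m g) k 0 = \sum_k \sum_l g k 0 * A k l * g l 0.
  apply: eq_bigr => k _; rewrite mxE big_distrr; by apply: eq_bigr => l _; exact: mulrA.
have e2 : \sum_k \sum_l g k 0 * A k l * g l 0 = - \sum_k \sum_l g k 0 * A k l * g l 0.
  rewrite {1}exchange_big /= -sumrN; apply: eq_bigr => l _; rewrite -sumrN; apply: eq_bigr => k _.
  have := congr1 (fun M : 'M[R]_n => M l k) hA; rewrite !mxE => ->.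
  by rewrite mulrN mulNr; congr (- _); ring.
rewrite e; apply/eqP; rewrite -[_ == 0](mulrn_eq0 _ 2) mulr2n {2}e2 subrr //.
Qed.

Lemma Sunit m : (Ssymp m : 'M[R]_(m+m)) \in unitmx.
Proof.
have h : Ssymp m *m (- Ssymp m) = 1%:M :> 'M[R]_(m+m) by rewrite mulmxN Ssq opprK.
by case: (mulmx1_unit h).
Qed.

Lemma powskew m (th : 'M[R]_(m+m)) : th^T = invmx (Ssymp m) *m th *m Ssymp m ->
  forall k, (th ^+ k *m Ssymp m)^T = - (th ^+ k *m Ssymp m).
Proof.
move=> hth; elim=> [|k IH].
  by rewrite expr0 mul1mx Str.
rewrite exprS mulmxE -mulrA -mulmxE trmx_mul IH hth !mulmxA mulNmx.
rewrite -(mulmxA _ (Ssymp m)) mulmxV ?Sunit // mulmx1.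
by rewrite mulNmx mulNmx !mulmxE -exprSr exprS.
Qed.
End S.

Lemma addc (R : realType) : continuous (fun x : R * R => x.1 + x.2).
Proof. exact: add_continuous. Qed.

Theorem corollary6p7 (R : realType) (m : nat) (H : 'cV[R]_(m + m) -> R)
  (DG : 'cV[R]_(m + m) -> 'cV[R]_(m + m) -> 'cV[R]_(m + m))
  (theta : 'M[R]_(m + m)) (a : nat -> R) (ftheta : 'M[R]_(m + m))
  (y0 y1 : 'cV[R]_(m + m)) :
  smooth H ->
  discrete_gradient H DG ->
  theta^T = invmx (Ssymp m) *m theta *m Ssymp m ->
  pseries_mx_to a theta ftheta ->
  y1 - y0 = ftheta *m Ssymp m *m DG y0 y1 ->
  H y1 = H y0.
Proof.
move=> _ [dg1 _] hth hF hy.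
set g := DG y0 y1.
pose q (M : 'M[R]_(m+m)) := \sum_k g k 0 * ((M *m Ssymp m) *m g) k 0.
pose s := Ssymp m *m g.
have qE : forall M, q M = \sum_k \sum_j g k 0 * (M k j * s j 0).
  move=> M; apply: eq_bigr => k _; rewrite -mulmxA mxE big_distrr.
  by apply: eq_bigr => j _.
have key : H y1 - H y0 = q ftheta.
  rewrite -dg1; apply: eq_bigr => k _; rewrite -hy !mxE.
  by [].
pose P := fun N : nat => \sum_(k < N) a k *: theta ^+ k.
have q0 : forall N, q (P N) = 0.
  move=> N; apply: Qskew.
  rewrite /P mulmx_suml raddf_sum /= -sumrN; apply: eq_bigr => k _.
  by rewrite -scalemxAl linearZ /= powskew // scalerN.
have cv : ((fun N => q (P N)) @ \oo --> q ftheta)%classic.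
  have -> : (fun N => q (P N)) = (fun N => \sum_k \sum_j g k 0 * (P N k j * s j 0)).
    by apply: funext => N; rewrite qE.
  rewrite qE.
  apply: (@cvg_big _ _ _ _ _ (addc R)) => k _.
  apply: (@cvg_big _ _ _ _ _ (addc R)) => j _.
  apply: cvgMl_tmp; apply: cvgMr_tmp.
  move: (@coord_continuous _ _ _ k j ftheta) => hc.
  exact: (cvg_comp _ _ hF hc).
have : q ftheta = 0.
  have h0 : ((fun N => q (P N)) @ \oo --> (0:R))%classic.
    have -> : (fun N => q (P N)) = (fun _ => 0) by apply: funext => N; rewrite q0.
    exact: cvg_cst.
  exact: (@cvg_unique R _ _ _ _ _ cv h0).
by move=> h; apply/eqP; rewrite -subr_eq0 key h.
Qed.
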